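(* Let $A$ be an associative algebra, $M$ an $A$-bimodule, and let $\{ T_\alpha : M \to A \}_{\alpha \in \Omega}$ and $\{ S_\alpha : M \to A \}_{\alpha \in \Omega}$ be two compatible $\mathcal{O}$-operator families. If the family $\{S_\alpha\}$ is invertible (each $S_\alpha$ is a linear isomorphism), then $\{ N_\alpha = T_{\alpha} \circ S_{\alpha}^{-1} : A \to A \}_{\alpha \in \Omega}$ is a Nijenhuis family on $A$. Likewise, if $\{T_\alpha\}$ is invertible, then $\{ N_\alpha = S_{\alpha} \circ T_{\alpha}^{-1} \}_{\alpha \in \Omega}$ is a Nijenhuis family on $A$.
   Context: $\Omega$ is a semigroup, $\mathbf{k}$ a field of characteristic $0$. An $\mathcal{O}$-operator family is a collection of linear maps $T_\alpha:M\to A$ with $T_\alpha(u) \cdot T_\beta(v) = T_{\alpha\beta}(T_\alpha(u) \cdot v + u \cdot T_\beta(v))$ for all $u,v\in M$, $\alpha,\beta\in\Omega$. Two $\mathcal{O}$-operator families $\{T_\alpha\},\{S_\alpha\}$ are compatible if $\{\lambda T_\alpha+\eta S_\alpha\}_{\alpha}$ is an $\mathcal{O}$-operator family for all $\lambda,\eta\in\mathbf{k}$. A Nijenhuis family is a collection of linear maps $N_\alpha:A\to A$ with $N_\alpha(a) \cdot N_\beta(b) = N_{\alpha \beta} \big( N_\alpha (a) \cdot b + a \cdot N_\beta(b) - N_{\alpha \beta}(a \cdot b) \big)$. *)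

(* Defs.v *)
From HB Require Import structures.
From mathcomp Require Import all_boot all_order all_algebra.
Set Implicit Arguments. Unset Strict Implicit. Unset Printing Implicit Defensive.
Import GRing.Theory.
Local Open Scope ring_scope.

Definition is_assoc_algebra (k : fieldType) (A : lmodType k)
    (mulA : A -> A -> A) : Prop :=
  (forall a : A, linear (mulA a)) /\
  (forall b : A, linear (fun a => mulA a b)) /\
  (forall a b c : A, mulA (mulA a b) c = mulA a (mulA b c)).

Definition is_bimodule (k : fieldType) (A M : lmodType k)
    (mulA : A -> A -> A) (lact : A -> M -> M) (ract : M -> A -> M) : Prop :=
  (forall a : A, linear (lact a)) /\
  (forall m : M, linear (fun a => lact a m)) /\
  (forall m : M, linear (ract m)) /\
  (forall a : A, linear (fun m => ract m a)) /\
  (forall (a b : A) (m : M), lact (mulA a b) m = lact a (lact b m)) /\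
  (forall (a b : A) (m : M), ract m (mulA a b) = ract (ract m a) b) /\
  (forall (a b : A) (m : M), ract (lact a m) b = lact a (ract m b)).

Definition is_semigroup (Omega : Type) (op : Omega -> Omega -> Omega) : Prop :=
  forall x y z, op (op x y) z = op x (op y z).

Definition O_operator_family (k : fieldType) (A M : lmodType k) (Omega : Type)
    (op : Omega -> Omega -> Omega) (mulA : A -> A -> A)
    (lact : A -> M -> M) (ract : M -> A -> M) (T : Omega -> M -> A) : Prop :=
  (forall al, linear (T al)) /\
  (forall (u v : M) (al be : Omega),
     mulA (T al u) (T be v) = T (op al be) (lact (T al u) v + ract u (T be v))).

Definition compatible_O_operator_families (k : fieldType) (A M : lmodType k)
    (Omega : Type) (op : Omega -> Omega -> Omega) (mulA : A -> A -> A)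
    (lact : A -> M -> M) (ract : M -> A -> M) (T S : Omega -> M -> A) : Prop :=
  forall lam eta : k,
    O_operator_family op mulA lact ract (fun al u => lam *: T al u + eta *: S al u).

Definition Nijenhuis_family (k : fieldType) (A : lmodType k) (Omega : Type)
    (op : Omega -> Omega -> Omega) (mulA : A -> A -> A) (N : Omega -> A -> A) : Prop :=
  (forall al, linear (N al)) /\
  (forall (a b : A) (al be : Omega),
     mulA (N al a) (N be b) =
     N (op al be) (mulA (N al a) b + mulA a (N be b) - N (op al be) (mulA a b))).

(* Main.v *)
Require Import Defs.
From mathcomp Require Import all_boot all_order all_algebra.
Import GRing.Theory.
Local Open Scope ring_scope.

Lemma linD (k : fieldType) (U V : lmodType k) (f : U -> V) :
  linear f -> forall x y, f (x + y) = f x + f y.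
Proof. by move=> H x y; rewrite -(scale1r x) H !scale1r. Qed.

Arguments linD {k U V f}.

Lemma lin_inv (k : fieldType) (U V : lmodType k) (f : U -> V) (g : V -> U) :
  linear f -> cancel f g -> cancel g f -> linear g.
Proof.
move=> H fK gK a x y; apply: (can_inj fK); by rewrite H !gK.
Qed.

Arguments lin_inv {k U V f g}.

Lemma main_dir (k : fieldType) (Omega : Type)
    (op : Omega -> Omega -> Omega) (A M : lmodType k)
    (mulA : A -> A -> A) (lact : A -> M -> M) (ract : M -> A -> M)
    (T S : Omega -> M -> A) :
  O_operator_family op mulA lact ract T ->
  O_operator_family op mulA lact ract S ->
  (forall u v al be, mulA (T al u) (S be v) + mulA (S al u) (T be v) =
     T (op al be) (lact (S al u) v + ract u (S be v)) +
     S (op al be) (lact (T al u) v + ract u (T be v))) ->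
  forall Sinv : Omega -> A -> M,
     (forall al, cancel (S al) (Sinv al) /\ cancel (Sinv al) (S al)) ->
     Nijenhuis_family op mulA (fun al => T al \o Sinv al).
Proof.
move=> [Tl To] [Sl So] X Sinv Hinv; split.
  move=> al a x y /=.
  have [h1 h2] := Hinv al.
  by rewrite (lin_inv (Sl al) h1 h2) Tl.
move=> a b al be /=.
have [h1 ha] := Hinv al; have [h2 hb] := Hinv be; have [hab _] := Hinv (op al be).
rewrite -(ha a) -(hb b) h1 h2.
move: (Sinv al a) (Sinv be b) => u v.
rewrite So hab X (addrC (T _ _)) addrK hab To //.
Qed.

Lemma zlem (V : zmodType) (a b c d e f : V) :
  a + b + (c + d) = a + e + (f + d) -> b + c = e + f.
Proof. by rewrite -!addrA => /addrI; rewrite !addrA => /addIr. Qed.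

Theorem proposition2p10 (k : fieldType) (Omega : Type)
    (op : Omega -> Omega -> Omega) (A M : lmodType k)
    (mulA : A -> A -> A) (lact : A -> M -> M) (ract : M -> A -> M)
    (T S : Omega -> M -> A) :
  [pchar k] =i pred0 ->
  is_semigroup op ->
  is_assoc_algebra mulA ->
  is_bimodule mulA lact ract ->
  O_operator_family op mulA lact ract T ->
  O_operator_family op mulA lact ract S ->
  compatible_O_operator_families op mulA lact ract T S ->
  (forall Sinv : Omega -> A -> M,
     (forall al, cancel (S al) (Sinv al) /\ cancel (Sinv al) (S al)) ->
     Nijenhuis_family op mulA (fun al => T al \o Sinv al)) /\
  (forall Tinv : Omega -> A -> M,
     (forall al, cancel (T al) (Tinv al) /\ cancel (Tinv al) (T al)) ->
     Nijenhuis_family op mulA (fun al => S al \o Tinv al)).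
Proof.
move=> _ _ [mL [mR _]] [lL [lR [rL [rR _]]]] HT HS HC.
have X : forall u v al be, mulA (T al u) (S be v) + mulA (S al u) (T be v) =
     T (op al be) (lact (S al u) v + ract u (S be v)) +
     S (op al be) (lact (T al u) v + ract u (T be v)).
  move=> u v al be.
  have [TL TO] := HT; have [SL SO] := HS.
  have [_ C] := HC 1 1.
  have := C u v al be; rewrite !scale1r.
  rewrite (linD (mL _)) !(linD (mR _)).
  have E : lact (T al u + S al u) v + ract u (T be v + S be v) =
    (lact (T al u) v + ract u (T be v)) + (lact (S al u) v + ract u (S be v)).
    by rewrite (linD (lR _)) (linD (rL _)) addrACA.
  rewrite E (linD (TL _)) (linD (SL _)) -TO -SO.
  by move=> H; rewrite addrC; apply: zlem H.
split.
  exact: main_dir HT HS X.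
apply: main_dir HS HT _ => u v al be.
by rewrite addrC X addrC.
Qed.
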